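(* Let $n>2$ be an even integer and let $\Phi^{(n,n/2)}:M_n\to M_n$ be defined by $\Phi^{(n,n/2)}([a_{ij}])=\operatorname{diag}(b_1,\dots,b_n)-[a_{ij}]$ with $b_i=(n-1)a_{ii}+a_{\sigma(i),\sigma(i)}$, where $\sigma(i)\equiv i+n/2\pmod n$, $\sigma(i)\in\{1,\dots,n\}$. Then $\Phi^{(n,n/2)}$ is a decomposable positive linear map.
   Context: A linear map $\phi:M_n\to M_n$ is decomposable if $\phi=\phi_1+\phi_2$ where $\phi_1$ is completely positive and $\phi_2$ is completely copositive (i.e. $\phi_2$ composed with the transpose map is completely positive). *)

(* Defs.v *)
(* Matrices over an arbitrary numeric algebraically closed
   field C (e.g. the complex numbers); matrix indices are 0-based. *)
From HB Require Import structures.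
From mathcomp Require Import all_boot all_order all_algebra.
Set Implicit Arguments. Unset Strict Implicit. Unset Printing Implicit Defensive.
Import Order.TTheory GRing.Theory Num.Theory.
Local Open Scope ring_scope.

Section Defs.
Variable C : numClosedFieldType.

Definition form n (x : 'cV[C]_n) (A : 'M[C]_n) (y : 'cV[C]_n) : C :=
  ((map_mx Num.conj x)^T *m A *m y) 0 0.

(* positive semidefinite: x^* A x >= 0 (in particular real) for all x *)
Definition psd n (A : 'M[C]_n) : Prop := forall x : 'cV[C]_n, 0 <= form x A x.

(* A k x k block matrix with n x n blocks B i j, i.e. an element of
   M_k (M_n) = M_(kn), is positive semidefinite; this is psd of the block
   matrix written out with block vectors x = (x_0, ..., x_(k-1)). *)
Definition block_psd k n (B : 'I_k -> 'I_k -> 'M[C]_n) : Prop :=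
  forall x : 'I_k -> 'cV[C]_n, 0 <= \sum_(i < k) \sum_(j < k) form (x i) (B i j) (x j).

Definition linear_map n (phi : 'M[C]_n -> 'M[C]_n) : Prop :=
  forall (a : C) (A B : 'M[C]_n), phi (a *: A + B) = a *: phi A + phi B.

Definition positive_map n (phi : 'M[C]_n -> 'M[C]_n) : Prop :=
  forall A : 'M[C]_n, psd A -> psd (phi A).

(* completely positive: id_k (x) phi is positive for every k *)
Definition completely_positive n (phi : 'M[C]_n -> 'M[C]_n) : Prop :=
  forall (k : nat) (B : 'I_k -> 'I_k -> 'M[C]_n),
    block_psd B -> block_psd (fun i j => phi (B i j)).

Definition completely_copositive n (phi : 'M[C]_n -> 'M[C]_n) : Prop :=
  completely_positive (fun A => phi A^T).

Definition decomposable n (phi : 'M[C]_n -> 'M[C]_n) : Prop :=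
  exists phi1 phi2 : 'M[C]_n -> 'M[C]_n,
    [/\ linear_map phi1, linear_map phi2,
        completely_positive phi1, completely_copositive phi2 &
        forall A, phi A = phi1 A + phi2 A].

Definition sigma n (i : 'I_n) : 'I_n :=
  Ordinal (ltn_pmod (i + n %/ 2) (leq_ltn_trans (leq0n i) (ltn_ord i))).

Definition PhiN n (A : 'M[C]_n) : 'M[C]_n :=
  \matrix_(i, j) ((i == j)%:R * ((n - 1)%:R * A i i + A (sigma i) (sigma i)) - A i j).

End Defs.

(* Main.v *)
From HB Require Import structures.
From mathcomp Require Import all_boot all_order all_algebra.
From mathcomp Require Import ring zify.
Require Import Defs.
Set Implicit Arguments. Unset Strict Implicit. Unset Printing Implicit Defensive.
Import Order.TTheory GRing.Theory Num.Theory.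
Local Open Scope ring_scope.

Section K.
Variable C : numClosedFieldType.

Definition cj m p (M : 'M[C]_(m,p)) := map_mx (@Num.conj C) M.
Definition adj m p (M : 'M[C]_(m,p)) := (cj M)^T.

Lemma cjK m p (M : 'M[C]_(m,p)) : cj (cj M) = M.
Proof. by apply/matrixP => i j; rewrite !mxE conjCK. Qed.

Lemma cjM m p q (A : 'M[C]_(m,p)) (B : 'M[C]_(p,q)) : cj (A *m B) = cj A *m cj B.
Proof. exact: map_mxM. Qed.

Lemma form_adj n (x y : 'cV[C]_n) (V A : 'M[C]_n) :
  form x (V *m A *m adj V) y = form (adj V *m x) A (adj V *m y).
Proof.
rewrite /form /adj map_mxM.
have -> : map_mx (@Num.conj C) (cj V)^T = V^T.
  by apply/matrixP => i j; rewrite !mxE conjCK.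
by rewrite trmx_mul trmxK !mulmxA.
Qed.

Lemma form_sum n (T : finType) (c : T -> C) (M : T -> 'M[C]_n) x y :
  form x (\sum_t c t *: M t) y = \sum_t c t * form x (M t) y.
Proof.
rewrite /form mulmx_sumr mulmx_suml summxE; apply: eq_bigr => t _.
by rewrite -scalemxAr -scalemxAl mxE.
Qed.

Lemma form_add n x (A B : 'M[C]_n) y : form x (A + B) y = form x A y + form x B y.
Proof. by rewrite /form mulmxDr mulmxDl mxE. Qed.

Lemma kraus_cp n (T : finType) (c : T -> C) (V : T -> 'M[C]_n)
   (phi : 'M[C]_n -> 'M[C]_n) :
  (forall t, 0 <= c t) ->
  (forall A, phi A = \sum_t c t *: (V t *m A *m adj (V t))) ->
  completely_positive phi.
Proof.
move=> c0 Hphi k B HB x.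
have -> : \sum_(i < k) \sum_(j < k) form (x i) (phi (B i j)) (x j) =
  \sum_t c t * \sum_(i < k) \sum_(j < k)
      form (adj (V t) *m x i) (B i j) (adj (V t) *m x j).
  transitivity (\sum_(i < k) \sum_(j < k) \sum_t c t *
      form (adj (V t) *m x i) (B i j) (adj (V t) *m x j)).
    apply: eq_bigr => i _; apply: eq_bigr => j _.
    by rewrite Hphi form_sum; apply: eq_bigr => t _; rewrite form_adj.
  under eq_bigr => i _ do rewrite exchange_big.
  rewrite exchange_big /=; apply: eq_bigr => t _.
  rewrite mulr_sumr; apply: eq_bigr => i _.
  by rewrite mulr_sumr.
apply: sumr_ge0 => t _; apply: mulr_ge0 => //; exact: HB.
Qed.

Lemma psd_tr n (A : 'M[C]_n) : psd A -> psd A^T.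
Proof.
move=> HA x; suff -> : form x A^T x = form (cj x) A (cj x) by exact: HA.
rewrite /form; set M := (_ *m _ *m _).
transitivity (M^T 0 0); first by rewrite [in RHS]mxE.
rewrite /M !trmx_mul !trmxK mulmxA; congr ((_ *m _ *m _) _ _).
by apply/matrixP => i j; rewrite !mxE conjCK.
Qed.

Variable n : nat.
Hypothesis n2 : (2 < n)%N.
Hypothesis ev : ~~ odd n.

Lemma sigmaK : involutive (@sigma n).
Proof.
move=> i; apply: val_inj => /=.
have h : (n %/ 2 + n %/ 2 = n)%N.
  have := divn_eq n 2; have : (n %% 2 = 0)%N by rewrite modn2; move/negbTE: ev => ->.
  lia.
rewrite modnDml -addnA h modnDr modn_small //.
Qed.

Lemma sigma_neq i : @sigma n i != i.
Proof.
apply/eqP => /(congr1 val) /=.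
have h1 : (0 < n %/ 2)%N by rewrite divn_gt0 //; lia.
have h2 : (n %/ 2 < n)%N by rewrite ltn_Pdiv //; lia.
have hi := ltn_ord i.
case: (ltnP (i + n %/ 2) n) => h.
  rewrite modn_small //; lia.
have -> : (i + n %/ 2 = (i + n %/ 2 - n) + n)%N by lia.
rewrite modnDr modn_small; lia.
Qed.

Lemma sigma_eq i j : (i == @sigma n j) = (sigma i == j).
Proof. by apply/eqP/eqP => [->|<-]; rewrite sigmaK. Qed.

Notation d x y := ((x == y)%:R : C).

Lemma sum_only (x : 'I_n) (F : 'I_n -> C) :
  (forall k, k != x -> F k = 0) -> \sum_k F k = F x.
Proof.
move=> H; rewrite (bigD1 x) //= big1 ?addr0 // => k; exact: H.
Qed.

Lemma sum_delta (x : 'I_n) (F : 'I_n -> C) : \sum_k d x k * F k = F x.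
Proof.
rewrite (@sum_only x) ?eqxx ?mul1r // => k hk.
by rewrite eq_sym (negbTE hk) mul0r.
Qed.

Lemma sum_d1 (x : 'I_n) : \sum_k d x k = 1.
Proof.
rewrite -[RHS](sum_delta x (fun _ => 1)); by apply: eq_bigr => k _; rewrite mulr1.
Qed.

Lemma sum_dd (x y : 'I_n) : \sum_k d x k * d y k = d y x.
Proof. exact: (sum_delta x (fun k => d y k)). Qed.

Lemma dsum (F G : 'I_n -> C) :
  \sum_a \sum_b (F a - F b) * (G a - G b) =
  2 * (n%:R * \sum_a F a * G a - (\sum_a F a) * (\sum_a G a)).
Proof.
transitivity (\sum_a \sum_b ((F a * G a + F b * G b) - (F a * G b + G a * F b))).
  by apply: eq_bigr => a _; apply: eq_bigr => b _; ring.
under eq_bigr do rewrite sumrB big_split /= -mulr_sumr big_split /= -mulr_sumr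
  -mulr_sumr sumr_const card_ord.
rewrite sumrB !big_split /= -!mulr_suml sumr_const card_ord.
under eq_bigr do rewrite mulrnAr -mulr_natr.
rewrite -mulr_suml; ring.
Qed.



Notation sg := (@sigma n).

Definition phi1 (A : 'M[C]_n) : 'M[C]_n :=
  \matrix_(i, j) (((i == j)%:R * (n - 1)%:R - 1 + (j == sg i)%:R) * A i j).
Definition phi2 (A : 'M[C]_n) : 'M[C]_n :=
  \matrix_(i, j) ((i == j)%:R * A (sg i) (sg i) - (j == sg i)%:R * A i j).

Lemma Phi_split A : PhiN A = phi1 A + phi2 A.
Proof.
apply/matrixP => i j; rewrite !mxE.
move: ((n - 1)%:R : C) => m; case: eqP => [<-|_] /=; ring.
Qed.

Lemma phi1_lin : linear_map phi1.
Proof. by move=> a A B; apply/matrixP => i j; rewrite !mxE; ring. Qed.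
Lemma phi2_lin : linear_map phi2.
Proof. by move=> a A B; apply/matrixP => i j; rewrite !mxE; ring. Qed.
Lemma Phi_lin : linear_map (@PhiN C n).
Proof. by move=> a A B; apply/matrixP => i j; rewrite !mxE; ring. Qed.

Definition dv (t : 'I_n * 'I_n) k : C := d k t.1 - d k t.2.
Definition V1 (t : 'I_n * 'I_n) : 'M[C]_n := diag_mx (\row_k dv t k).
Definition c1 (t : 'I_n * 'I_n) : C := (1 - d t.2 (sg t.1)) / 2.

Lemma c1_ge0 t : 0 <= c1 t.
Proof.
rewrite /c1; case: eqP => _; rewrite ?subrr ?mul0r // subr0 mul1r.
by rewrite invr_ge0 ler0n.
Qed.

Lemma V1_entry t A i j :
  (V1 t *m A *m adj (V1 t)) i j = dv t i * dv t j * A i j.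
Proof.
rewrite /adj /cj /V1 map_diag_mx tr_diag_mx mul_diag_mx mul_mx_diag !mxE.
by rewrite /dv rmorphB /= !conjC_nat; ring.
Qed.

Lemma coef1 i j :
  \sum_t c1 t * (dv t i * dv t j) = (i == j)%:R * (n - 1)%:R - 1 + (j == sg i)%:R.
Proof.
rewrite -(pair_bigA _ (fun a b => c1 (a, b) * (dv (a, b) i * dv (a, b) j))) /=.
rewrite /c1 /dv /=.
transitivity ((\sum_a \sum_b (d i a - d i b) * (d j a - d j b)
   - \sum_a \sum_b d b (sg a) * ((d i a - d i b) * (d j a - d j b))) / 2).
  rewrite -sumrB mulr_suml; apply: eq_bigr => a _.
  rewrite -sumrB mulr_suml; apply: eq_bigr => b _.
  rewrite ![(_ == a)]eq_sym ![(_ == b)]eq_sym; ring.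
have -> : \sum_a \sum_b d b (sg a) * ((d i a - d i b) * (d j a - d j b))
   = \sum_a (d i a - d i (sg a)) * (d j a - d j (sg a)).
  apply: eq_bigr => a _; under eq_bigr => b _ do rewrite (eq_sym b).
  exact: (sum_delta (sg a) (fun b => (d i a - d i b) * (d j a - d j b))).
rewrite dsum !sum_delta !sum_d1.
under eq_bigr => a _ do rewrite !sigma_eq mulrBl !mulrBr.
rewrite !sumrB !sum_dd (eq_sym (sg j) i) sigma_eq (eq_sym (sg i) j).
rewrite (inj_eq (can_inj (@sigmaK))) natrB; last by apply: ltnW; apply: ltn_trans n2.
rewrite (eq_sym i j); field => //.

Qed.

Lemma phi1_cp : completely_positive phi1.
Proof.
apply: (kraus_cp (c:=c1) (V:=V1)) => [|A]; first exact: c1_ge0.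
apply/matrixP => i j; rewrite summxE mxE -coef1 mulr_suml.
by apply: eq_bigr => t _; rewrite mxE V1_entry; ring.
Qed.

Lemma sdA (x : 'I_n) (c : C) (F : 'I_n -> C) : \sum_k (c * d k x) * F k = c * F x.
Proof.
rewrite -(sum_delta x) mulr_sumr; apply: eq_bigr => k _.
by rewrite eq_sym; ring.
Qed.

Lemma sdB (x : 'I_n) (c : C) (F : 'I_n -> C) : \sum_k F k * (c * d k x) = c * F x.
Proof.
rewrite -(sum_delta x) mulr_sumr; apply: eq_bigr => k _.
by rewrite eq_sym; ring.
Qed.

Definition W (a : 'I_n) : 'M[C]_n :=
  \matrix_(i, k) (d i a * d k (sg a) - d i (sg a) * d k a).

Lemma W_entry A i j a : (W a *m A *m adj (W a)) i j =
  d i a * d j a * A (sg a) (sg a) - d i a * d j (sg a) * A (sg a) a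
  - d i (sg a) * d j a * A a (sg a) + d i (sg a) * d j (sg a) * A a a.
Proof.
rewrite !mxE.
under eq_bigr => l _ do rewrite !mxE rmorphB !rmorphM /= !conjC_nat.
under eq_bigr => l _ do under eq_bigr => k _ do rewrite !mxE mulrBl.
under eq_bigr => l _ do rewrite sumrB !sdA.
under eq_bigr => l _ do rewrite mulrBr.
rewrite sumrB !sdB; ring.
Qed.

Lemma phi2_cocp : completely_copositive phi2.
Proof.
apply: (kraus_cp (c:=fun _ => 1/2) (V:=W)) => [a|A].
  by rewrite mul1r invr_ge0 ler0n.
apply/matrixP => i j; rewrite summxE !mxE.
under eq_bigr => a _ do rewrite mxE W_entry !sigma_eq -![_ * _ * A _ _]mulrA mul1r.
rewrite -mulr_sumr !big_split /= !sumrN !sum_delta sigmaK (inj_eq (can_inj (@sigmaK))).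
rewrite (eq_sym (sg j) i) (sigma_eq i j) (eq_sym (sg i) j) (eq_sym j i).
case: (j =P sg i) => [->|_]; rewrite ?mul0r; field => //.
Qed.

End K.


Theorem corollary3 (C : numClosedFieldType) (n : nat) :
  (2 < n)%N -> ~~ odd n ->
  linear_map (@PhiN C n) /\ positive_map (@PhiN C n) /\ decomposable (@PhiN C n).
Proof.
move=> n2 ev; split; first exact: Phi_lin.
split.
  move=> A HA x; rewrite Phi_split form_add; apply: addr_ge0.
    have := @phi1_cp C n n2 ev 1 (fun _ _ => A) _ (fun _ => x).
    rewrite !big_ord1; apply => y; rewrite !big_ord1; exact: HA.
  have := @phi2_cocp C n n2 ev 1 (fun _ _ => A^T) _ (fun _ => x).
  rewrite !big_ord1 /= trmxK; apply => y; rewrite !big_ord1; exact: psd_tr.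
exists (@phi1 C n), (@phi2 C n); split.
- exact: phi1_lin.
- exact: phi2_lin.
- exact: phi1_cp.
- exact: phi2_cocp.
- exact: Phi_split.
Qed.
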